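(* For any $\alpha>0$, integers $n>0$, $m>2$ with $m>n$, and $k$ with $n\le k\le m$, there exists a full rank matrix $X\in\mathbb{R}^{n\times m}$ such that for every subset $\mathcal S\subseteq[m]$ of cardinality $k$ with $\mathrm{rank}(X_{\mathcal S})=n$, $$\|X_{\mathcal S}^{\dagger}\|_2^2\ge\Big(\frac{m+\alpha^2}{k+\alpha^2}-1\Big)\|X^{\dagger}\|_2^2 .$$
   Context: $[m]=\{1,\dots,m\}$; $X_{\mathcal S}$ is the submatrix of columns of $X$ indexed by $\mathcal S$; $A^\dagger$ is the Moore–Penrose pseudo-inverse; $\|\cdot\|_2$ is the spectral norm. *)

(* Defs.v *)
From HB Require Import structures.
From mathcomp Require Import all_boot all_order all_algebra.
From mathcomp Require Import boolp classical_sets reals.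
Set Implicit Arguments. Unset Strict Implicit. Unset Printing Implicit Defensive.
Import Order.TTheory GRing.Theory Num.Theory.
Local Open Scope ring_scope.
Local Open Scope classical_set_scope.

Definition vnorm {R : realType} {p : nat} (v : 'cV[R]_p) : R :=
  Num.sqrt (\sum_(i < p) v i 0 ^+ 2).

Definition spnorm {R : realType} {p q : nat} (A : 'M[R]_(p, q)) : R :=
  sup [set vnorm (A *m v) | v in [set v : 'cV[R]_q | vnorm v <= 1]].

Definition penrose {R : realType} {p q : nat} (A : 'M[R]_(p, q)) (B : 'M[R]_(q, p)) : Prop :=
  [/\ A *m B *m A = A, B *m A *m B = B, (A *m B)^T = A *m B & (B *m A)^T = B *m A].

(* The Moore-Penrose pseudo-inverse (it exists and is unique; chosen via xget). *)
Definition pinv {R : realType} {p q : nat} (A : 'M[R]_(p, q)) : 'M[R]_(q, p) :=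
  xget 0 [set B | penrose A B].

(* X_S : the submatrix of X formed by the columns indexed by S (in increasing order). *)
Definition subcols {R : realType} {p q : nat} (X : 'M[R]_(p, q)) (S : {set 'I_q})
  : 'M[R]_(p, #|S|) :=
  colsub (@enum_val _ (mem S)) X.

(* Main.v *)
Require Import Defs.
From HB Require Import structures.
From mathcomp Require Import all_boot all_order all_algebra.
From mathcomp Require Import boolp classical_sets reals.
From mathcomp Require Import ring lra zify.
Set Implicit Arguments. Unset Strict Implicit.
Import Order.TTheory GRing.Theory Num.Theory.
Local Open Scope ring_scope.

Section H.
Variable R : realType.

Lemma sumsq_ge0 p (v : 'cV[R]_p) : 0 <= \sum_(i<p) v i 0 ^+ 2.
Proof. by apply: sumr_ge0 => i _; exact: sqr_ge0. Qed.

Lemma vnorm_sq p (v : 'cV[R]_p) : vnorm v ^+ 2 = \sum_(i<p) v i 0 ^+2.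
Proof. by rewrite /vnorm sqr_sqrtr // sumsq_ge0. Qed.

Lemma vnorm_ge0 p (v : 'cV[R]_p) : 0 <= vnorm v.
Proof. exact: sqrtr_ge0. Qed.

Lemma vnorm0 p : vnorm (0 : 'cV[R]_p) = 0.
Proof. by rewrite /vnorm big1 ?sqrtr0 // => i _; rewrite mxE expr0n. Qed.

Lemma vnorm_le1 p (v : 'cV[R]_p) : vnorm v <= 1 -> forall j, `|v j 0| <= 1.
Proof.
move=> h j.
have h2 : \sum_(i<p) v i 0 ^+2 <= 1.
  rewrite -vnorm_sq; have := vnorm_ge0 v; nra.
have : v j 0 ^+ 2 <= 1.
  apply: le_trans h2; rewrite (bigD1 j) //= lerDl; apply: sumr_ge0 => i _; exact: sqr_ge0.
rewrite -real_normK ?num_real //; have := normr_ge0 (v j 0); nra.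
Qed.

Lemma mx_bounded p q (M : 'M[R]_(p,q)) : exists C, forall v : 'cV_q,
  vnorm v <= 1 -> vnorm (M *m v) <= C.
Proof.
exists (Num.sqrt (\sum_(i<p) (\sum_(j<q) `|M i j|)^+2)) => v hv.
rewrite /vnorm ler_sqrt; last by apply: sumr_ge0 => i _; exact: sqr_ge0.
apply: ler_sum => i _; rewrite mxE.
have h1 : `|\sum_j M i j * v j 0| <= \sum_j `|M i j|.
  apply: le_trans (ler_norm_sum _ _ _) _; apply: ler_sum => j _.
  rewrite normrM; have := vnorm_le1 hv j; have := normr_ge0 (M i j); nra.
rewrite -real_normK ?num_real //; have := normr_ge0 (\sum_j M i j * v j 0); nra.
Qed.

Lemma spnorm_ub p q (M : 'M[R]_(p,q)) v : vnorm v <= 1 -> vnorm (M *m v) <= spnorm M.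
Proof.
move=> hv; case: (mx_bounded M) => C hC.
apply: sup_upper_bound; last by exists v.
split; first by exists (vnorm (M *m v)), v.
by exists C => _ [w hw <-]; exact: hC.
Qed.

Lemma spnorm_le p q (M : 'M[R]_(p,q)) C :
  (forall v, vnorm v <= 1 -> vnorm (M *m v) <= C) -> spnorm M <= C.
Proof.
move=> h; apply: ge_sup.
  have h0 : vnorm (0 : 'cV[R]_q) <= 1 by rewrite vnorm0 ler01.
  by exists (vnorm (M *m 0)), 0.
by move=> _ [v hv <-]; exact: h.
Qed.

Lemma spnorm_ge0 p q (M : 'M[R]_(p,q)) : 0 <= spnorm M.
Proof.
have h0 : vnorm (0 : 'cV[R]_q) <= 1 by rewrite vnorm0 ler01.
by apply: le_trans (spnorm_ub M h0); apply: vnorm_ge0.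
Qed.

Lemma AAT_unit p q (A : 'M[R]_(p,q)) : row_free A -> A *m A^T \in unitmx.
Proof.
move=> fA; rewrite -row_free_unit; apply: inj_row_free => v hv.
have h : (v *m A) *m (v *m A)^T = 0.
  by rewrite trmx_mul mulmxA -(mulmxA v) hv mul0mx.
have h2 : v *m A = 0.
  move: h; set w := v *m A; clearbody w => h.
  apply/matrixP => i j; rewrite (ord1 i) [RHS]mxE.
  have := congr1 (fun M : 'M[R]_1 => M 0 0) h; rewrite [LHS]mxE [RHS]mxE => /eqP.
  rewrite psumr_eq0; last by move=> l _; rewrite mxE -expr2 sqr_ge0.
  move=> /allP /(_ j (mem_index_enum _)) /=; rewrite mxE -expr2 sqrf_eq0.
  by move/eqP.
by apply: (row_free_inj fA); rewrite h2 mul0mx.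
Qed.

Lemma penrose_ex p q (A : 'M[R]_(p,q)) : row_free A ->
  penrose A (A^T *m invmx (A *m A^T)).
Proof.
move=> fA; have U := AAT_unit fA.
have AB : A *m (A^T *m invmx (A *m A^T)) = 1%:M by rewrite mulmxA mulmxV.
split.
- by rewrite AB mul1mx.
- by rewrite -mulmxA AB mulmx1.
- by rewrite AB trmx1.
- rewrite !trmx_mul trmxK trmx_inv trmx_mul trmxK mulmxA //.
Qed.

Lemma pinv_penrose p q (A : 'M[R]_(p,q)) : row_free A -> penrose A (pinv A).
Proof. by move=> fA; apply: xgetPex; exists (A^T *m invmx (A *m A^T)); apply: penrose_ex. Qed.

Lemma penrose_right p q (A : 'M[R]_(p,q)) B : row_free A -> penrose A B -> A *m B = 1%:M.
Proof. by move=> fA [h1 _ _ _]; apply: (row_free_inj fA); rewrite h1 mul1mx. Qed.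

Lemma penrose_orth p q (A : 'M[R]_(p,q)) B : A *m A^T = 1%:M -> penrose A B -> B = A^T.
Proof.
move=> hA hB; have fA : row_free A.
  by apply/row_freeP; exists A^T.
have AB := penrose_right fA hB.
case: hB => _ h2 _ h4.
have eB : B = A^T *m (B^T *m B).
  by rewrite -{1}h2 -h4 trmx_mul mulmxA.
have : A *m B = B^T *m B by rewrite {1}eB mulmxA hA mul1mx.
by rewrite AB => e; rewrite eB -e mulmx1.
Qed.

Lemma vnorm_sqT p (w : 'cV[R]_p) : vnorm w ^+ 2 = (w^T *m w) 0 0.
Proof. by rewrite vnorm_sq mxE; apply: eq_bigr => i _; rewrite mxE expr2. Qed.

Definition cc (n m : nat) : R := (Num.sqrt ((m - n).+1)%:R)^-1.

Lemma cc2 n m : cc n m ^+ 2 = (((m - n).+1)%:R)^-1.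
Proof. by rewrite /cc exprVn sqr_sqrtr // ler0n. Qed.

Definition Xm (n m : nat) : 'M[R]_(n, m) :=
  \matrix_(r < n, c < m) if (r == 0%N :> nat) then (if (c < (m - n).+1)%N then cc n m else 0)
                          else (if ((c : nat) == r + (m - n))%N then 1 else 0).

Lemma XXT n m : (0 < n)%N -> (n <= m)%N -> Xm n m *m (Xm n m)^T = 1%:M.
Proof.
move=> n0 nm; apply/matrixP => r r'; rewrite !mxE.
under eq_bigr => c _ do rewrite !mxE.
have [r0|r0] := eqVneq (r : nat) 0%N; have [r'0|r'0] := eqVneq (r' : nat) 0%N.
- have -> : r = r' by apply: val_inj; rewrite /= r0 r'0.
  rewrite eqxx /=.
  rewrite (eq_bigr (fun c : 'I_m => if (c < (m - n).+1)%N then cc n m * cc n m else 0)); last first.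
    by move=> c _; case: ifP => _; rewrite ?mulr0.
  rewrite -big_mkcond /= -(big_ord_widen _ (fun _ => cc n m * cc n m)); last by lia.
  rewrite sumr_const card_ord -expr2 cc2 -[_ *+ _]mulr_natr mulVf //.
  by rewrite pnatr_eq0.
- rewrite big1; last first.
    move=> c _; case: ifP => h1; case: ifP => h2 //; try by rewrite ?mulr0 ?mul0r.
    move/eqP: h2 => h2; exfalso; move: h1; rewrite h2; lia.
  have -> : (r == r') = false by apply/eqP => e; move: r'0; rewrite -e r0.
  by [].
- rewrite big1; last first.
    move=> c _; case: ifP => h1; case: ifP => h2 //; try by rewrite ?mulr0 ?mul0r.
    move/eqP: h1 => h1; exfalso; move: h2; rewrite h1; lia.
  have -> : (r == r') = false by apply/eqP => e; move: r0; rewrite e r'0.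
  by [].
- have hc : (r + (m - n) < m)%N by have := ltn_ord r; lia.
  rewrite (bigD1 (Ordinal hc)) //= big1; last first.
    move=> c hc'; case: ifP => h1 //; last by rewrite mul0r.
    by exfalso; move: hc'; rewrite -val_eqE /= h1.
  rewrite eqxx mul1r addr0 eqn_add2r.
  by case: (r =P r') => [->|ne]; rewrite ?eqxx //; case: eqP => // e; exfalso; apply: ne; apply: val_inj.
Qed.

Lemma rankX n m : (0 < n)%N -> (n <= m)%N -> \rank (Xm n m) = n.
Proof.
move=> n0 nm; apply/eqP; rewrite eqn_leq rank_leq_row /=.
by rewrite -{1}(mxrank1 R n) -(XXT n0 nm) mxrankM_maxl.
Qed.

Lemma spnorm_pinvX n m : (0 < n)%N -> (n <= m)%N -> spnorm (pinv (Xm n m)) <= 1.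
Proof.
move=> n0 nm; have hX := XXT n0 nm.
have fX : row_free (Xm n m) by rewrite /row_free rankX.
rewrite (penrose_orth hX (pinv_penrose fX)).
apply: spnorm_le => v hv.
have e : vnorm ((Xm n m)^T *m v) ^+ 2 = vnorm v ^+ 2.
  by rewrite !vnorm_sqT trmx_mul trmxK mulmxA -(mulmxA v^T) hX mulmx1.
have := vnorm_ge0 ((Xm n m)^T *m v); have := vnorm_ge0 v; nra.
Qed.

Lemma lower_sub n m (S : {set 'I_m}) : (0 < n)%N -> (0 < #|S|)%N ->
  \rank (subcols (Xm n m) S) = n ->
  ((m - n).+1)%:R / #|S|%:R <= spnorm (pinv (subcols (Xm n m) S)) ^+ 2.
Proof.
move=> n0 k0 hr; set A := subcols (Xm n m) S.
have fA : row_free A by rewrite /row_free hr.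
have AB := penrose_right fA (pinv_penrose fA).
set B := pinv A in AB *.
pose i0 : 'I_n := Ordinal n0.
pose e0 : 'cV[R]_n := \col_i ((i == i0)%:R).
have he0 : vnorm e0 <= 1.
  rewrite /vnorm (bigD1 i0) //= big1; last by move=> i hi; rewrite mxE (negbTE hi) expr0n.
  by rewrite mxE eqxx expr1n addr0 sqrtr1.
pose y := B *m e0.
have hy : A *m y = e0 by rewrite /y mulmxA AB mul1mx.
have h1 : \sum_j A i0 j * y j 0 = 1.
  by have := congr1 (fun M : 'cV[R]_n => M i0 0) hy; rewrite !mxE eqxx.
have ha : forall j, A i0 j ^+ 2 <= cc n m ^+ 2.
  move=> j; rewrite /A /subcols !mxE /=; case: ifP => _; first by [].
  by rewrite expr0n /= exprn_ge0 // invr_ge0 sqrtr_ge0.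
set d : R := ((m - n).+1)%:R; set k : R := #|S|%:R.
have kp : 0 < k by rewrite ltr0n.
have dp : 0 < d by rewrite ltr0n.
have c2 : cc n m ^+ 2 = d^-1 by rewrite cc2.
pose s := d / k.
have hsum : 2 * s - s ^+ 2 * cc n m ^+ 2 * k <= \sum_j y j 0 ^+ 2.
  have -> : 2 * s - s ^+ 2 * cc n m ^+ 2 * k =
     \sum_j (2 * s * (A i0 j * y j 0) - s ^+ 2 * cc n m ^+ 2).
    rewrite sumrB -mulr_sumr h1 mulr1 sumr_const card_ord /k.
    by rewrite mulr_natr.
  apply: ler_sum => j _; have := ha j.
  have := sqr_ge0 (y j 0 - s * A i0 j); nra.
have hs : 2 * s - s ^+ 2 * cc n m ^+ 2 * k = d / k.
  rewrite c2 /s; field; apply/andP; split; [by rewrite pnatr_eq0 -lt0n | apply: lt0r_neq0; have := ler0n R (m - n); lra].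
have hv := spnorm_ub B he0.
have := vnorm_ge0 (B *m e0); rewrite -/y in hv *.
have := vnorm_sq y; rewrite -hs; nra.
Qed.
End H.

Theorem theorem4p3 (R : realType) (alpha : R) (n m k : nat) :
  0 < alpha -> (0 < n)%N -> (2 < m)%N -> (n < m)%N -> (n <= k)%N -> (k <= m)%N ->
  exists X : 'M[R]_(n, m),
    \rank X = n /\
    forall S : {set 'I_m}, #|S| = k -> \rank (subcols X S) = n ->
      spnorm (pinv (subcols X S)) ^+ 2 >=
        ((m%:R + alpha ^+ 2) / (k%:R + alpha ^+ 2) - 1) * spnorm (pinv X) ^+ 2.
Proof.
move=> ha n0 m2 nm nk km; exists (Xm R n m); split; first by apply: rankX => //; lia.
move=> S hS hr.
have k0 : (0 < #|S|)%N by rewrite hS; lia.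
subst k; have L := lower_sub n0 k0 hr.
have U := spnorm_pinvX R n0 (ltnW nm).
have U0 := spnorm_ge0 (pinv (Xm R n m)).
set t := spnorm (pinv (Xm R n m)) in U U0 *.
set d : R := ((m - n).+1)%:R in L.
have hmd : m%:R <= d + #|S|%:R by rewrite /d -natrD ler_nat; lia.
have kp : 0 < #|S|%:R :> R by rewrite ltr0n; lia.
set A := alpha ^+ 2.
have Ap : 0 < A by rewrite /A exprn_gt0.
have hf : (m%:R + A) / (#|S|%:R + A) - 1 <= d / #|S|%:R.
  rewrite lerBlDl ler_pdivrMr; last by lra.
  set q := d / #|S|%:R.
  have hq : q * #|S|%:R = d by rewrite /q divfK // lt0r_neq0.
  have q0 : 0 <= q by rewrite /q divr_ge0 // ler0n.
  nra.
have dk0 : 0 <= d / #|S|%:R by rewrite divr_ge0 // ler0n.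
apply: le_trans L.
set f := (_ / _ - 1) in hf *.
have t2 : t ^+ 2 <= 1 by nra.
case: (lerP 0 f) => hf0; nra.
Qed.
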